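(* Let $\mathbb F$ be a field and define $P_n:=z^2\bigl(y\,\mathrm{HC}_n+y^2\,\mathrm{HC}_n^2\bigr)$, where $y,z$ are variables distinct from the variables of $\mathrm{HC}_n$. Then the $\mathsf p$-family $(P)=(P_n)_{n\in\mathbb N}$ lies in $\mathrm{VNPC}(\trianglelefteq_{\mathsf p})$.
   Context: $\varepsilon$ is a new indeterminate. A $\mathsf p$-family $(f)=(f_n)_{n\in\mathbb N}$ is a sequence of multivariate polynomials whose number of variables and degree are polynomially bounded in $n$. For polynomials over a field $K$, $f\le g$ (projection) means $f=g(\alpha_1,\dots,\alpha_M)$ where each $\alpha_i$ is a variable of $f$ or an element of $K$; $(f)\le_{\mathsf p}(g)$ if there is a polynomially bounded $t$ with $f_n\le g_{t(n)}$ for all $n$. For $f,g$ over $\mathbb F$, $f\trianglelefteq g$ if $f+\varepsilon h\le g$ (projection over $\mathbb F(\varepsilon)$) for some polynomial $h$ over $\mathbb F[\varepsilon]$; $(f)\trianglelefteq_{\mathsf p}(g)$ if $f_n\trianglelefteq g_{t(n)}$ for all $n$ for some polynomially bounded $t$. $\mathrm{HC}_n=\sum_{\pi}\prod_{i=1}^n x_{i,\pi(i)}$, summing over permutations $\pi$ of $\{1,\dots,n\}$ that are $n$-cycles. $\mathrm{VNP}$ is the set of $\mathsf p$-families $(f)$ over $\mathbb F$ with $(f)\le_{\mathsf p}(\mathrm{HC})$, and $\mathrm{VNPC}(\trianglelefteq_{\mathsf p})=\{(f)\in\mathrm{VNP}:(\mathrm{HC})\trianglelefteq_{\mathsf p}(f)\}$.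 *)

(* Defs.v *)
From HB Require Import structures.
From mathcomp Require Import all_boot all_order all_algebra all_fingroup.
From mathcomp Require Import fraction.
From mathcomp Require Import mpoly.
Set Implicit Arguments. Unset Strict Implicit. Unset Printing Implicit Defensive.
Import GRing.Theory.
Local Open Scope ring_scope.

Definition poly_bounded (t : nat -> nat) : Prop :=
  exists c : nat, forall n, (t n <= c * n ^ c + c)%N.

(* total degree of a multivariate polynomial (0 for the zero polynomial) *)
Definition tdeg (R : nzRingType) (k : nat) (p : {mpoly R[k]}) : nat := (msize p).-1.

Definition is_pfamily (R : nzRingType) (N : nat -> nat) (f : forall n, {mpoly R[N n]}) : Prop :=
  poly_bounded N /\ poly_bounded (fun n => tdeg (f n)).

Definition proj_subst (K : comNzRingType) (m M : nat) (alpha : 'I_M -> 'I_m + K)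
  : M.-tuple {mpoly K[m]} :=
  [tuple match alpha i with inl j => 'X_j | inr c => c%:MP end | i < M].

Definition proj (K : comNzRingType) (m M : nat) (f : {mpoly K[m]}) (g : {mpoly K[M]}) : Prop :=
  exists alpha : 'I_M -> 'I_m + K, f = g \mPo proj_subst alpha.

Definition preduc (K : comNzRingType) (Nf Ng : nat -> nat)
  (f : forall n, {mpoly K[Nf n]}) (g : forall n, {mpoly K[Ng n]}) : Prop :=
  exists t, poly_bounded t /\ forall n, proj (f n) (g (t n)).

Definition Feps (F : fieldType) := {fraction {poly F}}.
Definition eps (F : fieldType) : Feps F := tofrac ('X : {poly F}).
Definition embF (F : fieldType) (c : F) : Feps F := tofrac (c%:P).
Definition embFeps (F : fieldType) (q : {poly F}) : Feps F := tofrac q.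

Definition bproj (F : fieldType) (m M : nat) (f : {mpoly F[m]}) (g : {mpoly F[M]}) : Prop :=
  exists h : {mpoly {poly F}[m]},
    proj (map_mpoly (@embF F) f + (eps F)%:MP * map_mpoly (@embFeps F) h)
         (map_mpoly (@embF F) g).

Definition bpreduc (F : fieldType) (Nf Ng : nat -> nat)
  (f : forall n, {mpoly F[Nf n]}) (g : forall n, {mpoly F[Ng n]}) : Prop :=
  exists t, poly_bounded t /\ forall n, bproj (f n) (g (t n)).

(* Hamiltonian cycle polynomial: variable x_{i,j} is 'X_(mxvec_index i j);
   an n-cycle is a permutation with exactly one cycle (orbit), of length n. *)
Definition is_ncycle (n : nat) (s : {perm 'I_n}) : bool := #|porbits s| == 1%N.

Definition HC (R : nzRingType) (n : nat) : {mpoly R[n * n]} :=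
  \sum_(s : {perm 'I_n} | is_ncycle s) \prod_(i < n) 'X_(mxvec_index i (s i)).

Definition VNP (F : fieldType) (N : nat -> nat) (f : forall n, {mpoly F[N n]}) : Prop :=
  is_pfamily f /\ preduc f (@HC F).

Definition VNPC (F : fieldType) (N : nat -> nat) (f : forall n, {mpoly F[N n]}) : Prop :=
  VNP f /\ bpreduc (@HC F) f.

Definition yvar (n : nat) : 'I_(n * n + 2) := rshift (n * n) (0 : 'I_2).
Definition zvar (n : nat) : 'I_(n * n + 2) := rshift (n * n) (1 : 'I_2).
Definition HCext (F : fieldType) (n : nat) : {mpoly F[n * n + 2]} :=
  HC F n \mPo [tuple 'X_(lshift 2 i) | i < n * n].

Definition Pfam (F : fieldType) (n : nat) : {mpoly F[n * n + 2]} :=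
  'X_(zvar n) ^+ 2 * ('X_(yvar n) * HCext F n + 'X_(yvar n) ^+ 2 * HCext F n ^+ 2).

(* Main.v *)
From HB Require Import structures.
Require Import Defs.
From mathcomp Require Import all_boot all_order all_algebra all_fingroup.
From mathcomp Require Import fraction.
From mathcomp Require Import mpoly.
From mathcomp Require Import ring zify.
Set Implicit Arguments. Unset Strict Implicit. Unset Printing Implicit Defensive.
Import GRing.Theory.
Local Open Scope ring_scope.

(* Proof strategy: the Hamiltonian cycle polynomial is
   recast as a sum over cyclic functions (hcf); two gadget lemmas
   (join = product, ladder = 1 + y * f) build an explicit projection of
   HC_(4n+3) onto P_n.  The border reduction uses y = eps^2, z = eps^-1. *)

Section Cyc.
Variable V : finType.

Definition invs (f : V -> V) (A : {set V}) : bool := [forall x in A, f x \in A].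

Definition cycb (f : V -> V) : bool :=
  (0 < #|V|)%N && [forall A : {set V}, invs f A ==> (A == set0) || (A == setT)].

Lemma invsP (f : V -> V) (A : {set V}) :
  reflect (forall x, x \in A -> f x \in A) (invs f A).
Proof. exact: forall_inP. Qed.

Lemma cycbP (f : V -> V) :
  reflect ((0 < #|V|)%N /\ forall A : {set V}, invs f A -> A = set0 \/ A = setT)
          (cycb f).
Proof.
apply: (iffP andP) => [[h /forallP H]|[h H]]; split => //.
  move=> A iA; have := H A; rewrite iA /= => /orP[/eqP->|/eqP->]; by [left|right].
apply/forallP => A; apply/implyP => /H [->|->]; by rewrite eqxx ?orbT.
Qed.

Lemma cycb_inv (f : V -> V) (A : {set V}) x :
  cycb f -> invs f A -> x \in A -> A = setT.
Proof.
move=> /cycbP [_ H] iA xA; case: (H A iA) => // A0.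
by rewrite A0 inE in xA.
Qed.

Lemma cycb_surj (f : V -> V) y : cycb f -> exists x, f x = y.
Proof.
move=> cf; have := cf => /cycbP [h _].
have [x0 _] : exists x0 : V, true.
  by move: h => /card_gt0P [x0 _]; exists x0.
have: f @: setT = setT.
  have H := @cycb_inv f (f @: setT) (f x0) cf.
  apply: H; first by apply/invsP => x _; apply: imset_f.
  by apply: imset_f.
move/setP/(_ y); rewrite inE => /imsetP [x _ ->]; by exists x.
Qed.

Lemma cycb_inj (f : V -> V) : cycb f -> injective f.
Proof.
move=> cf.
have E : f @: [set: V] = [set: V].
  apply/setP => y; rewrite inE; have [x <-] := cycb_surj y cf; exact: imset_f.
have /imset_injP H : #|f @: [set: V]| == #|[set: V]| by rewrite E.
by move=> x y; apply: H; rewrite inE.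
Qed.

Lemma cycb_no2 (f : V -> V) x y z :
  cycb f -> f x = y -> f y = x -> z != x -> z != y -> False.
Proof.
move=> cf fx fy zx zy.
have : [set x; y] = setT.
  apply: (@cycb_inv f _ x cf); last by rewrite !inE eqxx.
  by apply/invsP => u; rewrite !inE => /orP[/eqP->|/eqP->]; rewrite ?fx ?fy eqxx ?orbT.
by move/setP/(_ z); rewrite !inE (negbTE zx) (negbTE zy).
Qed.

End Cyc.

Lemma cycb_transport (V W : finType) (e : W -> V) (e' : V -> W) (f : V -> V) (g : W -> W) :
  cancel e e' -> cancel e' e -> (forall i, e (g i) = f (e i)) -> cycb f -> cycb g.
Proof.
move=> K1 K2 comm /cycbP [h H]; apply/cycbP; split.
  by move: h => /card_gt0P [x _]; apply/card_gt0P; exists (e' x).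
move=> B iB; pose A := [set x | e' x \in B].
have iA : invs f A.
  apply/invsP => x; rewrite !inE => xB.
  by rewrite -{1}[x]K2 -comm K1; move/invsP: iB; apply.
case: (H A iA) => [A0|AT]; [left|right]; apply/setP => b; rewrite inE.
  by apply/negbTE; apply/negP => bB; move/setP: A0 => /(_ (e b)); rewrite !inE K1 bB.
by move/setP: AT => /(_ (e b)); rewrite !inE K1.
Qed.

Definition hcf (R : comPzRingType) (V : finType) (w : V -> V -> R) : R :=
  \sum_(f : {ffun V -> V} | cycb f) \prod_x w x (f x).


Lemma cycb_porbits (V : finType) (s : {perm V}) :
  cycb s = (#|porbits s| == 1%N).
Proof.
apply/cycbP/idP => [[h H]|/eqP h1].
  have [x0 _] : exists x0 : V, true by move: h => /card_gt0P [x0 _]; exists x0.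
  have PT : forall x, porbit s x = setT.
    move=> x; have iA : invs s (porbit s x).
      apply/invsP => y /porbitP [i ->]; apply/porbitP; exists i.+1.
      by rewrite expgSr permM.
    case: (H _ iA) => // P0; by move: (porbit_id s x); rewrite P0 inE.
  apply/cards1P; exists setT; apply/setP => A; rewrite inE.
  apply/imsetP/eqP => [[x _ ->]|->]; first by rewrite PT.
  by exists x0; rewrite ?PT.
have [P0 P0in] : exists P, P \in porbits s.
  by move: h1 => /eqP/cards1P [P ->]; exists P; rewrite inE.
split.
  have /imsetP [x _ _] := P0in; by apply/card_gt0P; exists x.
move=> A iA; have [A0|[x xA]] := set_0Vmem A; first by left.
right; apply/setP => y; rewrite inE.
have: porbit s x = porbit s y.
  move: h1 => /eqP/cards1P [P PE].
  have : porbit s x \in porbits s by apply: imset_f.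
  have : porbit s y \in porbits s by apply: imset_f.
  by rewrite PE !inE => /eqP -> /eqP ->.
move=> E; have : y \in porbit s x by rewrite E porbit_id.
move/porbitP => [i ->]; rewrite permX.
elim: i => [|i IH] //=; move/invsP: iA; apply; exact: IH.
Qed.

Lemma perm_hcf (R : comPzRingType) (V : finType) (w : V -> V -> R) :
  \sum_(s : {perm V} | #|porbits s| == 1%N) \prod_x w x (s x) = hcf w.
Proof.
rewrite /hcf (reindex_onto (fun s : {perm V} => pval s) (fun f => insubd (1%g : {perm V}) f)).
  apply: eq_big => [s|s _]; last by apply: eq_bigr => x _; rewrite pvalE.
  by rewrite valKd eqxx andbT -cycb_porbits pvalE.
move=> f cf; rewrite insubdK //; apply/injectiveP; exact: cycb_inj cf.
Qed.

Lemma hcf_relabel (R : comPzRingType) (V W : finType) (e : W -> V) (e' : V -> W)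
  (K1 : cancel e e') (K2 : cancel e' e) (w : V -> V -> R) :
  hcf (fun i j => w (e i) (e j)) = hcf w.
Proof.
rewrite /hcf.
pose h (g : {ffun W -> W}) : {ffun V -> V} := [ffun x => e (g (e' x))].
pose h' (f : {ffun V -> V}) : {ffun W -> W} := [ffun i => e' (f (e i))].
have hK : cancel h h'.
  by move=> g; apply/ffunP => i; rewrite !ffunE K1 K1.
have h'K : cancel h' h.
  by move=> f; apply/ffunP => x; rewrite !ffunE K2 K2.
rewrite [RHS](reindex h); last by apply: onW_bij; exists h'.
apply: eq_big => [g|g _].
  apply/idP/idP => cg.
    apply: (@cycb_transport W V e' e g (h g) K2 K1 _ cg).
    by move=> x; rewrite ffunE K1.
  apply: (@cycb_transport V W e e' (h g) g K1 K2 _ cg).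
  by move=> i; rewrite ffunE K1.
rewrite (reindex e); last by apply: onW_bij; exists e'.
by apply: eq_bigr => i _; rewrite ffunE K1.
Qed.

Lemma hcf_unit (R : comPzRingType) (w : unit -> unit -> R) : hcf w = w tt tt.
Proof.
rewrite /hcf (big_pred1 [ffun _ => tt]).
  rewrite (big_pred1 tt) ?ffunE //; by case.
move=> f; have -> : f = [ffun _ => tt] by apply/ffunP => -[]; rewrite ffunE; case: (f tt).
rewrite /= eqxx; apply/cycbP; split; first by rewrite card_unit.
move=> A _; case: (boolP (tt \in A)) => tA; [right|left]; apply/setP => -[];
  by rewrite !inE ?tA // (negbTE tA).
Qed.

Lemma HC_comp (R : comNzRingType) m k (t : (m * m).-tuple {mpoly R[k]}) :
  HC R m \mPo t = hcf (fun i j : 'I_m => tnth t (mxvec_index i j)).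
Proof.
rewrite /HC rmorph_sum /= -perm_hcf; apply: eq_bigr => s _.
rewrite rmorph_prod; apply: eq_bigr => i _ /=; by rewrite comp_mpolyXU -tnth_nth.
Qed.


Lemma cycb_set (V : finType) (f : V -> V) (A : {set V}) :
  cycb f -> invs f A -> A = set0 \/ A = setT.
Proof. by move=> /cycbP [_ H]; apply: H. Qed.

Section Join.
Variables (V1 V2 : finType) (a : V1) (b : V2).

Definition joinw (T : Type) (z0 : T) (G1 : V1 -> V1 -> T) (G2 : V2 -> V2 -> T)
  (u v : V1 + V2) : T :=
  match u, v with
  | inl x, inl x' => if x == a then z0 else G1 x x'
  | inl x, inr y' => if x == a then G2 b y' else z0
  | inr y, inr y' => if y == b then z0 else G2 y y'
  | inr y, inl x' => if y == b then G1 a x' else z0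
  end.

Definition jvalid (u v : V1 + V2) : bool :=
  match u, v with
  | inl x, inl _ => x != a
  | inl x, inr _ => x == a
  | inr y, inr _ => y != b
  | inr y, inl _ => y == b
  end.

Definition joinf (f1 : V1 -> V1) (f2 : V2 -> V2) : {ffun V1 + V2 -> V1 + V2} :=
  [ffun u => match u with
             | inl x => if x == a then inr (f2 b) else inl (f1 x)
             | inr y => if y == b then inl (f1 a) else inr (f2 y)
             end].

Definition getl (u : V1 + V2) : V1 := if u is inl x then x else a.
Definition getr (u : V1 + V2) : V2 := if u is inr y then y else b.

Definition split1 (f : V1 + V2 -> V1 + V2) : {ffun V1 -> V1} :=
  [ffun x => if x == a then getl (f (inr b)) else getl (f (inl x))].
Definition split2 (f : V1 + V2 -> V1 + V2) : {ffun V2 -> V2} :=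
  [ffun y => if y == b then getr (f (inl a)) else getr (f (inr y))].

Lemma joinK (f : {ffun V1 + V2 -> V1 + V2}) :
  [forall u, jvalid u (f u)] -> joinf (split1 f) (split2 f) = f.
Proof.
move=> /forallP vf; apply/ffunP => u; rewrite !ffunE.
case: u vf => [x|y] vf.
  have := vf (inl x); case: eqP => [->|xa]; rewrite ?ffunE ?eqxx.
    by move: (f (inl a)) => -[x'|y'] /=; rewrite ?eqxx.
  by rewrite (introF eqP xa); move: (f (inl x)) => -[x'|y'] /=; rewrite ?(introF eqP xa).
have := vf (inr y); case: eqP => [->|yb]; rewrite ?ffunE ?eqxx.
  by move: (f (inr b)) => -[x'|y'] /=; rewrite ?eqxx.
by rewrite (introF eqP yb); move: (f (inr y)) => -[x'|y'] /=; rewrite ?(introF eqP yb).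
Qed.

Lemma split1K (f1 : {ffun V1 -> V1}) (f2 : V2 -> V2) : split1 (joinf f1 f2) = f1.
Proof.
apply/ffunP => x; rewrite !ffunE eqxx.
by case: eqP => [->|/eqP xa] /=; rewrite ?eqxx ?(negbTE xa).
Qed.

Lemma split2K (f1 : V1 -> V1) (f2 : {ffun V2 -> V2}) : split2 (joinf f1 f2) = f2.
Proof.
apply/ffunP => y; rewrite !ffunE eqxx.
by case: eqP => [->|/eqP yb] /=; rewrite ?eqxx ?(negbTE yb).
Qed.

Lemma joinf_valid (f1 : V1 -> V1) (f2 : V2 -> V2) : [forall u, jvalid u (joinf f1 f2 u)].
Proof.
apply/forallP => -[x|y]; rewrite ffunE /=.
  by case: (eqVneq x a).
by case: (eqVneq y b).
Qed.

Lemma cycb_joinf (f1 : V1 -> V1) (f2 : V2 -> V2) :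
  cycb (joinf f1 f2) = cycb f1 && cycb f2.
Proof.
set J := joinf f1 f2.
apply/idP/andP => [cJ|[c1 c2]].
  split; apply/cycbP; split.
  - by apply/card_gt0P; exists a.
  - move=> A1 iA1.
    pose A : {set V1 + V2} := [set u : V1 + V2 | match u with inl x => x \in A1 | inr _ => a \in A1 end].
    have iA : invs J A.
      apply/invsP => -[x|y]; rewrite !inE ffunE.
        case: eqP => [->|_] xA //=; by move/invsP: iA1; apply.
      move=> aA; case: eqP => _ //=; by move/invsP: iA1; apply.
    case: (cycb_set cJ iA) => [A0|AT]; [left|right]; apply/setP => x;
      move/setP: A0 => /(_ (inl x)) || move/setP: AT => /(_ (inl x));
      by rewrite !inE.
  - by apply/card_gt0P; exists b.
  - move=> A2 iA2.
    pose A : {set V1 + V2} := [set u : V1 + V2 | match u with inr y => y \in A2 | inl _ => b \in A2 end].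
    have iA : invs J A.
      apply/invsP => -[x|y]; rewrite !inE ffunE.
        move=> bA; case: eqP => _ //=; by move/invsP: iA2; apply.
      case: eqP => [->|_] yA //=; by move/invsP: iA2; apply.
    case: (cycb_set cJ iA) => [A0|AT]; [left|right]; apply/setP => y;
      move/setP: A0 => /(_ (inr y)) || move/setP: AT => /(_ (inr y));
      by rewrite !inE.
apply/cycbP; split; first by apply/card_gt0P; exists (inl a).
move=> A iA; pose A1 := [set x | inl x \in A]; pose A2 := [set y | inr y \in A].
have JA : forall u, u \in A -> J u \in A by move/invsP: iA.
case: (boolP (inl a \in A)) => aA.
  have fb : inr (f2 b) \in A by have := JA _ aA; rewrite ffunE eqxx.
  have iA2 : invs f2 A2.
    apply/invsP => y; rewrite !inE; case: (eqVneq y b) => [->|yb] // yA.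
    by have := JA _ yA; rewrite ffunE (negbTE yb).
  have A2T : A2 = setT.
    case: (cycb_set c2 iA2) => // A20; by move/setP: A20 => /(_ (f2 b)); rewrite !inE fb.
  have bA : inr b \in A by move/setP: A2T => /(_ b); rewrite !inE.
  have iA1 : invs f1 A1.
    apply/invsP => x; rewrite !inE; case: (eqVneq x a) => [->|xa] xA.
      by have := JA _ bA; rewrite ffunE eqxx.
    by have := JA _ xA; rewrite ffunE (negbTE xa).
  have A1T : A1 = setT.
    case: (cycb_set c1 iA1) => // A10; by move/setP: A10 => /(_ a); rewrite !inE aA.
  right; apply/setP => -[x|y]; rewrite inE.
    by move/setP: A1T => /(_ x); rewrite !inE.
  by move/setP: A2T => /(_ y); rewrite !inE.
have iA1 : invs f1 A1.
  apply/invsP => x; rewrite !inE => xA; have xa : x != a.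
    by apply: contraNneq aA => <-.
  by have := JA _ xA; rewrite ffunE (negbTE xa).
have A10 : A1 = set0.
  case: (cycb_set c1 iA1) => // A1T; by move/setP: A1T => /(_ a); rewrite !inE (negbTE aA).
have bA : inr b \notin A.
  apply/negP => bA; have := JA _ bA; rewrite ffunE eqxx => h.
  by move/setP: A10 => /(_ (f1 a)); rewrite !inE h.
have iA2 : invs f2 A2.
  apply/invsP => y; rewrite !inE => yA; have yb : y != b.
    by apply: contraNneq bA => <-.
  by have := JA _ yA; rewrite ffunE (negbTE yb).
have A20 : A2 = set0.
  case: (cycb_set c2 iA2) => // A2T; by move/setP: A2T => /(_ b); rewrite !inE (negbTE bA).
left; apply/setP => -[x|y]; rewrite inE.
  by move/setP: A10 => /(_ x); rewrite !inE.
by move/setP: A20 => /(_ y); rewrite !inE.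
Qed.

Variable R : comPzRingType.
Variables (G1 : V1 -> V1 -> R) (G2 : V2 -> V2 -> R).

Lemma joinw_weight (f1 : V1 -> V1) (f2 : V2 -> V2) :
  \prod_u joinw 0 G1 G2 u (joinf f1 f2 u) =
  (\prod_x G1 x (f1 x)) * (\prod_y G2 y (f2 y)).
Proof.
rewrite big_sumType /= (bigD1 a) //= [in RHS](bigD1 a) //=.
rewrite (bigD1 b) //= [in RHS](bigD1 b) //=.
rewrite !ffunE !eqxx /=.
rewrite (eq_bigr (fun x => G1 x (f1 x))); last first.
  by move=> x xa; rewrite ffunE; case: eqP xa => [->|]; rewrite ?eqxx.
rewrite [X in _ * (_ * X) = _](eq_bigr (fun y => G2 y (f2 y))); last first.
  by move=> y yb; rewrite ffunE; case: eqP yb => [->|]; rewrite ?eqxx.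
ring.
Qed.

Lemma hcf_join : hcf (joinw 0 G1 G2) = hcf G1 * hcf G2.
Proof.
rewrite /hcf (bigID (fun f : {ffun V1 + V2 -> V1 + V2} => [forall u, jvalid u (f u)])) /=.
rewrite [X in _ + X]big1 ?addr0; last first.
  move=> f /andP [_ /forallPn [u hu]]; rewrite (bigD1 u) //=.
  suff -> : joinw 0 G1 G2 u (f u) = 0 by rewrite mul0r.
  by move: hu; case: u => [x|y]; case: (f _) => [x'|y'] /=; case: eqP.
rewrite (reindex_onto (fun p : {ffun V1 -> V1} * {ffun V2 -> V2} => joinf p.1 p.2)
                      (fun f => (split1 f, split2 f))); last first.
  by move=> f /andP [_ vf]; rewrite joinK.
rewrite big_distrlr /= pair_big /=.
apply: eq_big => [[f1 f2]|[f1 f2] _] /=; last by rewrite joinw_weight.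
by rewrite cycb_joinf joinf_valid split1K split2K eqxx !andbT.
Qed.

End Join.


Section Ladder.
Variables (S : finType) (nx : S -> S) (s0 : S).

Notation L := ((S + S) + S)%type.

Definition ladw (T : Type) (z0 o1 y : T) (G : S -> S -> T) (u v : L) : T :=
  match u, v with
  | inl (inl i), inl (inr j) => if j == i then o1 else z0
  | inl (inl i), inr j => if j == nx i then o1 else z0
  | inl (inr i), inr j => if j == i then (if i == s0 then y else o1) else z0
  | inl (inr i), inl (inl j) => if j == i then o1 else z0
  | inr i, inl (inr j) => if j == i then o1 else z0
  | inr i, inl (inl j) => G i j
  | _, _ => z0
  end.

Definition ledge (u v : L) : bool :=
  match u, v with
  | inl (inl i), inl (inr j) => j == i
  | inl (inl i), inr j => j == nx i
  | inl (inr i), inr j => j == i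
  | inl (inr i), inl (inl j) => j == i
  | inr i, inl (inr j) => j == i
  | inr i, inl (inl j) => true
  | _, _ => false
  end.

Definition frev : {ffun L -> L} :=
  [ffun u : L => match u with
           | inl (inl i) => inr (nx i)
           | inl (inr i) => inl (inl i)
           | inr i => inl (inr i)
           end].

Definition ffwd (sg : S -> S) : {ffun L -> L} :=
  [ffun u : L => match u with
           | inl (inl i) => inl (inr i)
           | inl (inr i) => inr i
           | inr i => inl (inl (sg i))
           end].

Definition slot (u : L) : S :=
  match u with inl (inl i) => i | inl (inr i) => i | inr i => i end.

Definition sig_of (f : L -> L) : {ffun S -> S} := [ffun i => slot (f (inr i))].

Lemma sig_of_ffwd (sg : {ffun S -> S}) : sig_of (ffwd sg) = sg.
Proof. by apply/ffunP => i; rewrite !ffunE. Qed.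

Lemma ffwd_valid (sg : S -> S) : [forall u, ledge u (ffwd sg u)].
Proof. by apply/forallP => -[[i|i]|i]; rewrite ffunE /=. Qed.

Lemma frev_valid : [forall u, ledge u (frev u)].
Proof. by apply/forallP => -[[i|i]|i]; rewrite ffunE /=. Qed.

Lemma cycb_ffwd (sg : S -> S) : cycb (ffwd sg) = cycb sg.
Proof.
apply/idP/idP => /cycbP [h H]; apply/cycbP; split.
- by move: h => /card_gt0P [u _]; apply/card_gt0P; exists (slot u).
- move=> A iA; pose A' : {set L} := [set u : L | slot u \in A].
  have iA' : invs (ffwd sg) A'.
    apply/invsP => -[[i|i]|i]; rewrite !inE ffunE //=.
    by move/invsP: iA; apply.
  case: (H A' iA') => [A0|AT]; [left|right]; apply/setP => i.
    by move/setP: A0 => /(_ (inr i)); rewrite !inE.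
  by move/setP: AT => /(_ (inr i)); rewrite !inE.
- by move: h => /card_gt0P [i _]; apply/card_gt0P; exists (inr i).
- move=> A iA; have fA : forall u, u \in A -> ffwd sg u \in A by move/invsP: iA.
  pose B : {set S} := [set i | inl (inl i) \in A].
  have iB : invs sg B.
    apply/invsP => i; rewrite !inE => iin.
    have := fA _ (fA _ (fA _ iin)); by rewrite !ffunE.
  case: (H B iB) => [B0|BT]; [left|right]; apply/setP => u.
    rewrite inE; apply/negbTE/negP => uA.
    suff [j jA] : exists j, inl (inl j) \in A.
      by move/setP: B0 => /(_ j); rewrite !inE jA.
    move: uA; case: u => [[i|i]|i] uA; first by exists i.
      by exists (sg i); have := fA _ (fA _ uA); rewrite !ffunE.
    by exists (sg i); have := fA _ uA; rewrite !ffunE.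
  rewrite inE; have iin : inl (inl (slot u)) \in A.
    by move/setP: BT => /(_ (slot u)); rewrite !inE.
  case: u iin => [[i|i]|i] /= iin //.
    by have := fA _ iin; rewrite ffunE.
  by have := fA _ (fA _ iin); rewrite !ffunE.
Qed.

Lemma cycb_frev : cycb nx -> cycb frev.
Proof.
move=> /cycbP [h H]; apply/cycbP; split.
  by move: h => /card_gt0P [i _]; apply/card_gt0P; exists (inr i).
move=> A iA; have fA : forall u, u \in A -> frev u \in A by move/invsP: iA.
pose B : {set S} := [set i | inr i \in A].
have iB : invs nx B.
  apply/invsP => i; rewrite !inE => iin.
  have := fA _ (fA _ (fA _ iin)); by rewrite !ffunE.
case: (H B iB) => [B0|BT]; [left|right]; apply/setP => u.
  rewrite inE; apply/negbTE/negP => uA.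
  suff [j jA] : exists j, inr j \in A.
    by move/setP: B0 => /(_ j); rewrite !inE jA.
  move: uA; case: u => [[i|i]|i] uA; last by exists i.
    by exists (nx i); have := fA _ uA; rewrite !ffunE.
  by exists (nx i); have := fA _ (fA _ uA); rewrite !ffunE.
rewrite inE; have iin : inr (slot u) \in A.
  by move/setP: BT => /(_ (slot u)); rewrite !inE.
case: u iin => [[i|i]|i] /= iin //.
  by have := fA _ (fA _ iin); rewrite !ffunE.
by have := fA _ iin; rewrite ffunE.
Qed.

Lemma classify (f : {ffun L -> L}) :
  cycb nx -> cycb f -> [forall u, ledge u (f u)] -> f = frev \/ f = ffwd (sig_of f).
Proof.
move=> cnx cf /forallP vf.
have inj := cycb_inj cf.
have predmid : forall i, f (inl (inl i)) = inl (inr i) \/ f (inr i) = inl (inr i).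
  move=> i; have [u fu] := cycb_surj (inl (inr i)) cf.
  have := vf u; rewrite fu; case: u fu => [[j|j]|j] fu //= /eqP ji; subst j; by [left|right].
have midv : forall i, f (inl (inr i)) = inl (inl i) \/ f (inl (inr i)) = inr i.
  move=> i; have := vf (inl (inr i)).
  by case: (f _) => [[j|j]|j] //= /eqP ->; [left|right].
have inv : forall i, f (inl (inl i)) = inl (inr i) \/ f (inl (inl i)) = inr (nx i).
  move=> i; have := vf (inl (inl i)).
  by case: (f _) => [[j|j]|j] //= /eqP ->; [left|right].
have outv : forall i, f (inr i) = inl (inr i) \/ exists j, f (inr i) = inl (inl j).
  move=> i; have := vf (inr i).
  by case: (f _) => [[j|j]|j] //=; [right; exists j| move/eqP ->; left].
pose rv i := f (inl (inr i)) == inl (inl i).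
have CA : forall i, rv i -> f (inr i) = inl (inr i) /\ f (inl (inl i)) = inr (nx i).
  move=> i /eqP ri.
  have fo : f (inr i) = inl (inr i).
    case: (predmid i) => // fi; exfalso.
    by apply: (cycb_no2 (z := inr i) cf fi ri).
  split => //; case: (inv i) => // fi.
  by have := inj _ _ (etrans fi (esym fo)).
have CB : forall i, rv i -> rv (nx i).
  move=> i ri; have [_ fi] := CA i ri; rewrite /rv.
  case: (midv (nx i)) => [->//|fm].
  by have := inj _ _ (etrans fi (esym fm)).
have CC : forall i, ~~ rv i -> [/\ f (inl (inr i)) = inr i, f (inl (inl i)) = inl (inr i)
                                & exists j, f (inr i) = inl (inl j)].
  move=> i ri.
  have fm : f (inl (inr i)) = inr i.
    by case: (midv i) => // fm; rewrite /rv fm eqxx in ri.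
  have fi : f (inl (inl i)) = inl (inr i).
    case: (predmid i) => // fo; exfalso.
    by apply: (cycb_no2 (z := inl (inl i)) cf fo fm).
  split => //; case: (outv i) => // fo.
  by have := inj _ _ (etrans fo (esym fi)).
pose Rv : {set S} := [set i | rv i].
have iRv : invs nx Rv by apply/invsP => i; rewrite !inE; apply: CB.
case: (cycb_set cnx iRv) => [R0|RT]; [right|left]; apply/ffunP => u; rewrite ffunE.
  have nr : forall i, ~~ rv i by move=> i; move/setP: R0 => /(_ i); rewrite !inE => ->.
  case: u => [[i|i]|i]; have [h1 h2 [j h3]] := CC i (nr i) => //.
  by rewrite ffunE h3.
have r : forall i, rv i by move=> i; move/setP: RT => /(_ i); rewrite !inE.
case: u => [[i|i]|i]; have [h1 h2] := CA i (r i) => //.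
by apply/eqP; apply: r.
Qed.

Variable R : comPzRingType.
Variables (y : R) (G : S -> S -> R).

Lemma ladw0 u v : ~~ ledge u v -> ladw 0 1 y G u v = 0.
Proof.
by case: u => [[i|i]|i]; case: v => [[j|j]|j] //=; case: eqP.
Qed.

Lemma weight_frev : \prod_u ladw 0 1 y G u (frev u) = 1.
Proof.
rewrite big_sumType big_sumType /= !big1 ?mulr1 // => i _; by rewrite ffunE /= eqxx.
Qed.

Lemma weight_ffwd (sg : S -> S) :
  \prod_u ladw 0 1 y G u (ffwd sg u) = y * \prod_i G i (sg i).
Proof.
rewrite big_sumType big_sumType /= [X in X * _ * _]big1 ?mul1r; last first.
  by move=> i _; rewrite ffunE /= eqxx.
congr (_ * _); last by apply: eq_bigr => i _; rewrite ffunE.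
rewrite (bigD1 s0) //= ffunE /= !eqxx big1 ?mulr1 // => i /negbTE ni.
by rewrite ffunE /= eqxx ni.
Qed.

Lemma hcf_ladder : cycb nx -> hcf (ladw 0 1 y G) = 1 + y * hcf G.
Proof.
move=> cnx; rewrite /hcf.
rewrite (bigID (fun f : {ffun L -> L} => [forall u, ledge u (f u)])) /=.
rewrite [X in _ + X]big1 ?addr0; last first.
  move=> f /andP [_ /forallPn [u hu]]; rewrite (bigD1 u) //=.
  by rewrite ladw0 ?mul0r.
rewrite (bigD1 frev) /=; last by rewrite cycb_frev // frev_valid.
rewrite weight_frev; congr (_ + _).
rewrite (reindex_onto (fun sg : {ffun S -> S} => ffwd sg) (fun f => sig_of f)); last first.
  move=> f /andP [/andP [cf vf] nf]; case: (classify cnx cf vf) => // fr.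
  by rewrite fr eqxx in nf.
rewrite mulr_sumr; apply: eq_big => [sg|sg _]; last by rewrite weight_ffwd.
rewrite cycb_ffwd ffwd_valid sig_of_ffwd eqxx andbT andbT.
case cs: (cycb sg) => //=.
have /cycbP [/card_gt0P [i _] _] := cs.
apply/eqP => /ffunP /(_ (inl (inl i))); rewrite !ffunE.
by [].
Qed.

End Ladder.


Lemma iter_ordS n (i : 'I_n.+1) k : val (iter k (@ordS n.+1) i) = ((i + k) %% n.+1)%N.
Proof.
elim: k => [|k IH] /=; first by rewrite addn0 modn_small.
by rewrite /= IH -[((i + k) %% n.+1).+1]addn1 modnDml addn1 addnS.
Qed.

Lemma cycb_ordS n : cycb (@ordS n.+1).
Proof.
apply/cycbP; split; first by rewrite card_ord.
move=> A iA; have [A0|[i iA']] := set_0Vmem A; first by left.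
right; apply/setP => j; rewrite inE.
have : iter (j + (n.+1 - i)) (@ordS n.+1) i \in A.
  elim: (j + _)%N => [|k IH] //=; by move/invsP: iA; apply.
suff -> : iter (j + (n.+1 - i)) (@ordS n.+1) i = j by [].
apply: val_inj; rewrite iter_ordS /= addnCA subnKC; last exact: ltnW.
by rewrite addnC modnDl modn_small.
Qed.

Lemma eq_hcf (R : comPzRingType) (V : finType) (w w' : V -> V -> R) :
  (forall u v, w u v = w' u v) -> hcf w = hcf w'.
Proof. by move=> E; apply: eq_bigr => f _; apply: eq_bigr => x _; rewrite E. Qed.

Lemma joinw_map (V1 V2 : finType) (a : V1) (b : V2) (T T' : Type) (phi : T -> T')
  (z0 : T) G1 G2 u v :
  phi (joinw a b z0 G1 G2 u v) =
  joinw a b (phi z0) (fun x y => phi (G1 x y)) (fun x y => phi (G2 x y)) u v.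
Proof. by case: u => x; case: v => y /=; case: ifP. Qed.

Lemma ladw_map (S : finType) (nx : S -> S) (s0 : S) (T T' : Type) (phi : T -> T')
  (z0 o1 y : T) G u v :
  phi (ladw nx s0 z0 o1 y G u v) =
  ladw nx s0 (phi z0) (phi o1) (phi y) (fun x y => phi (G x y)) u v.
Proof.
by case: u => [[i|i]|i]; case: v => [[j|j]|j] /=; repeat case: ifP.
Qed.

Lemma hcf_const_unit (R : comPzRingType) (c : R) : hcf (fun _ _ : unit => c) = c.
Proof. by rewrite hcf_unit. Qed.


Section Assembly.
Variable F : fieldType.
Variable k : nat.

Definition evs (t : 'I_k + F) : {mpoly F[k]} :=
  match t with inl j => 'X_j | inr c => c%:MP end.

Lemma hcf_join_ev (V1 V2 : finType) (a : V1) (b : V2) G1 G2 :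
  hcf (fun u v => evs (joinw a b (inr 0) G1 G2 u v)) =
  hcf (fun u v => evs (G1 u v)) * hcf (fun u v => evs (G2 u v)).
Proof.
rewrite -(hcf_join a b); apply: eq_hcf => u v; by rewrite (joinw_map a b evs) /= mpolyC0.
Qed.

Lemma hcf_lad_ev p (y : 'I_k + F) G :
  hcf (fun u v => evs (ladw (@ordS p.+1) ord0 (inr 0) (inr 1) y G u v)) =
  1 + evs y * hcf (fun u v => evs (G u v)).
Proof.
rewrite -(@hcf_ladder _ (@ordS p.+1) ord0 _ (evs y) (fun u v => evs (G u v)) (cycb_ordS p)).
by apply: eq_hcf => u v; rewrite (ladw_map _ _ evs) /= mpolyC0 mpolyC1.
Qed.

End Assembly.

Section Build.
Variables (F : fieldType) (p : nat).
Local Notation n := p.+1.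
Local Notation T := ('I_(n * n + 2) + F)%type.
Local Notation Lt := (('I_n + 'I_n) + 'I_n)%type.

Definition Kx (i j : 'I_n) : T := inl (lshift 2 (mxvec_index i j)).
Definition Lad : Lt -> Lt -> T :=
  ladw (@ordS n) ord0 (inr 0) (inr 1) (inl (yvar n)) Kx.
Definition J1 := joinw (ord0 : 'I_n) (inl (inr ord0) : Lt) (inr 0) Kx Lad.
Definition J2 := joinw (inl ord0 : 'I_n + Lt) tt (inr 0) J1 (fun _ _ => inl (zvar n)).
Definition J3 := joinw (inl (inl ord0) : ('I_n + Lt) + unit) tt (inr 0) J2
                       (fun _ _ => inl (zvar n)).
Definition J4 := joinw (inl (inl (inl ord0)) : (('I_n + Lt) + unit) + unit) tt (inr 0) J3
                       (fun _ _ => inl (yvar n)).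

Lemma HCext_hcf : HCext F n = hcf (fun u v => evs (Kx u v)).
Proof.
rewrite /HCext HC_comp; apply: eq_hcf => i j; by rewrite tnth_mktuple.
Qed.

Lemma hcf_J4 : hcf (fun u v => evs (J4 u v)) = Pfam F n.
Proof.
rewrite /J4 hcf_join_ev /J3 hcf_join_ev /J2 hcf_join_ev /J1 hcf_join_ev /Lad hcf_lad_ev.
rewrite !hcf_const_unit -HCext_hcf /Pfam /=.
ring.
Qed.

End Build.


Definition vidx m (q : 'I_(m * m)) : 'I_m * 'I_m :=
  enum_val (cast_ord (esym (mxvec_cast m m)) q).

Lemma vidxE m (i j : 'I_m) : vidx (mxvec_index i j) = (i, j).
Proof. by rewrite /vidx /mxvec_index cast_ordK enum_rankK. Qed.

Lemma tnth_proj_subst (K : fieldType) (m M : nat) (alpha : 'I_M -> 'I_m + K) q :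
  tnth (proj_subst alpha) q = evs (alpha q).
Proof. by rewrite tnth_mktuple. Qed.

Lemma proj_hcf (F : fieldType) m t (V : finType) (w : V -> V -> 'I_m + F)
  (cV : #|V| = t) : exists alpha : 'I_(t * t) -> 'I_m + F,
  HC F t \mPo proj_subst alpha = hcf (fun u v => evs (w u v)).
Proof.
pose e (i : 'I_t) : V := enum_val (cast_ord (esym cV) i).
pose e' (v : V) : 'I_t := cast_ord cV (enum_rank v).
have K1 : cancel e e' by move=> i; rewrite /e /e' enum_valK cast_ordKV.
have K2 : cancel e' e by move=> v; rewrite /e /e' cast_ordK enum_rankK.
exists (fun q => w (e (vidx q).1) (e (vidx q).2)).
rewrite HC_comp -(hcf_relabel K1 K2); apply: eq_hcf => i j.
by rewrite tnth_proj_subst vidxE.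
Qed.

Lemma HC0 (F : fieldType) : HC F 0 = 0.
Proof.
rewrite /HC big_pred0 // => s; rewrite /is_ncycle.
suff -> : porbits s = set0 by rewrite cards0.
by apply/setP => P; rewrite inE; apply/imsetP => -[[]].
Qed.

Lemma Pfam0 (F : fieldType) : Pfam F 0 = 0.
Proof. rewrite /Pfam /HCext HC0 comp_mpoly0; ring. Qed.

Lemma preduc_P (F : fieldType) : preduc (@Pfam F) (@HC F).
Proof.
exists (fun n => 4 * n + 3)%N; split.
  exists 4%N => n; apply: leq_add => //; rewrite leq_mul2l /=.
  by case: n => // n; rewrite -{1}(expn1 n.+1) leq_pexp2l.
case=> [|p].
  exists (fun _ => inr 0); rewrite Pfam0 HC_comp /hcf big1 // => f _.
  rewrite (bigD1 ord0) //= tnth_proj_subst /= mpolyC0 mul0r //.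
have cV : #|{: ((('I_p.+1 + (('I_p.+1 + 'I_p.+1) + 'I_p.+1)) + unit) + unit) + unit}|
          = (4 * p.+1 + 3)%N.
  rewrite !card_sum !card_ord card_unit; lia.
have [alpha h] := proj_hcf (@J4 F p) cV.
by exists alpha; rewrite h hcf_J4.
Qed.


HB.instance Definition _ (F : fieldType) :=
  GRing.RMorphism.copy (@embF F) ((@tofrac _) \o (@polyC F)).
HB.instance Definition _ (F : fieldType) :=
  GRing.RMorphism.copy (@embFeps F) (@tofrac _).

Lemma hcf_rmorph (R S : comPzRingType) (phi : {rmorphism R -> S}) (V : finType)
  (w : V -> V -> R) : phi (hcf w) = hcf (fun u v => phi (w u v)).
Proof.
rewrite /hcf rmorph_sum; apply: eq_bigr => f _; by rewrite rmorph_prod.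
Qed.

Lemma HC_X (R : comNzRingType) n : HC R n = hcf (fun i j : 'I_n => 'X_(mxvec_index i j)).
Proof.
rewrite -{1}(comp_mpoly_id (HC R n)) HC_comp; apply: eq_hcf => i j.
by rewrite tnth_mktuple.
Qed.

Lemma HCext_X (F : fieldType) n :
  HCext F n = hcf (fun i j : 'I_n => 'X_(lshift 2 (mxvec_index i j))).
Proof. rewrite /HCext HC_comp; apply: eq_hcf => i j; by rewrite tnth_mktuple. Qed.

Lemma map_embF_X (F : fieldType) k (i : 'I_k) : map_mpoly (@embF F) 'X_i = 'X_i.
Proof. exact: map_mpolyX. Qed.

Lemma map_map_mpoly (R S U : nzRingType) (f : {rmorphism R -> S}) (g : {rmorphism S -> U}) k
  (p : {mpoly R[k]}) : map_mpoly g (map_mpoly f p) = map_mpoly (g \o f) p.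
Proof. by apply/mpolyP => m; rewrite !mcoeff_map_mpoly. Qed.

Lemma split_lshift m n (i : 'I_m) : split (lshift n i) = inl i.
Proof. exact: (unsplitK (inl _ i)). Qed.
Lemma split_rshift m n (i : 'I_n) : split (rshift m i) = inr i.
Proof. exact: (unsplitK (inr _ i)). Qed.

Lemma Pfam_morph (F : fieldType) (S : comNzRingType) n
  (phi : {rmorphism {mpoly F[n * n + 2]} -> S}) :
  phi (Pfam F n) = phi 'X_(zvar n) ^+ 2 *
    (phi 'X_(yvar n) * hcf (fun i j : 'I_n => phi 'X_(lshift 2 (mxvec_index i j))) +
     phi 'X_(yvar n) ^+ 2 * hcf (fun i j : 'I_n => phi 'X_(lshift 2 (mxvec_index i j))) ^+ 2).
Proof.
rewrite /Pfam HCext_X rmorphM rmorphD !rmorphM hcf_rmorph; ring.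
Qed.

Lemma expr_morph (R S : comNzRingType) (phi : {rmorphism R -> S}) (a b h : R) :
  phi (a ^+ 2 * (b * h + b ^+ 2 * h ^+ 2)) =
  phi a ^+ 2 * (phi b * phi h + phi b ^+ 2 * phi h ^+ 2).
Proof. by rewrite rmorphM rmorphD !rmorphM; ring. Qed.

Section BP.
Variable F : fieldType.
Local Notation K := (Feps F).

Lemma eps_neq0 : eps F != 0.
Proof. by rewrite /eps tofrac_eq0 polyX_eq0. Qed.

Lemma bproj_P n : bproj (HC F n) (Pfam F n).
Proof.
pose HK := hcf (fun i j : 'I_n => ('X_(mxvec_index i j) : {mpoly K[n * n]})).
exists (('X : {poly F})%:MP * (map_mpoly (@polyC F) (HC F n)) ^+ 2).
pose alpha (q : 'I_(n * n + 2)) : 'I_(n * n) + K :=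
  match split q with inl j => inl j
  | inr b => inr (if b == 0 then eps F ^+ 2 else (eps F)^-1) end.
exists alpha.
have hm1 : map_mpoly (@embF F) (HC F n) = HK.
  by rewrite HC_X hcf_rmorph; apply: eq_hcf => i j; exact: map_mpolyX.
have hm2 : map_mpoly (@embFeps F) (map_mpoly (@polyC F) (HC F n)) = HK.
  by rewrite HC_X !hcf_rmorph; apply: eq_hcf => i j /=; rewrite !map_mpolyX.
rewrite rmorphM rmorphXn /= hm1 hm2 map_mpolyC.
rewrite /Pfam HCext_X.
rewrite (expr_morph (map_mpoly (@embF F))) (hcf_rmorph (map_mpoly (@embF F))).
rewrite (expr_morph (comp_mpoly (proj_subst alpha))) (hcf_rmorph (comp_mpoly (proj_subst alpha))).
rewrite /= !map_embF_X !comp_mpolyXU -!tnth_nth !tnth_proj_subst /alpha /yvar /zvar !split_rshift /=.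
rewrite (eq_hcf (w' := fun i j => 'X_(mxvec_index i j))); last first.
  by move=> i j; rewrite map_embF_X comp_mpolyXU -tnth_nth tnth_proj_subst /= split_lshift.
rewrite -/HK.
change (embFeps 'X) with (eps F).
set E := (eps F)%:MP.
have hE : (eps F)^-1%:MP * E = 1 :> {mpoly K[n * n]}.
  by rewrite -mpolyCM mulVf ?eps_neq0 // mpolyC1.
have -> : (eps F ^+ 2)%:MP = E ^+ 2 :> {mpoly K[n * n]} by rewrite rmorphXn.
transitivity (((eps F)^-1%:MP * E) ^+ 2 * HK + ((eps F)^-1%:MP * E) ^+ 2 * (E * (E * HK ^+ 2))).
  by rewrite hE; ring.
by ring.
Qed.

End BP.


Section Deg.
Variables (F : fieldType) (k : nat).
Implicit Types p q : {mpoly F[k]}.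

Lemma msM p q : (msize (p * q) <= msize p + msize q + 1)%N.
Proof. by rewrite addn1; apply: msizeM_le. Qed.

Lemma msD p q : (msize (p + q) <= msize p + msize q)%N.
Proof. apply: leq_trans (msizeD_le _ _) _; by rewrite geq_max leq_addr leq_addl. Qed.

Lemma msX (i : 'I_k) : msize ('X_i : {mpoly F[k]}) = 2%N.
Proof. by rewrite msizeX mdeg1. Qed.

Lemma ms_prodX (I : Type) (r : seq I) (g : I -> 'I_k) :
  (msize (\prod_(i <- r) ('X_(g i) : {mpoly F[k]})) <= 3 * size r + 1)%N.
Proof.
elim: r => [|x r IH]; first by rewrite big_nil msize1.
rewrite big_cons; apply: leq_trans (msM _ _) _; rewrite msX /=.
apply: leq_trans (leq_add (leq_add (leqnn 2) IH) (leqnn 1)) _; lia.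
Qed.
End Deg.

Lemma ms_HCext (F : fieldType) n : (msize (HCext F n) <= 3 * n + 1)%N.
Proof.
rewrite HCext_X /hcf.
apply: (big_ind (fun q : {mpoly F[n * n + 2]} => msize q <= 3 * n + 1)%N).
- by rewrite msize0.
- move=> x y hx hy; apply: leq_trans (msizeD_le _ _) _; by rewrite geq_max hx hy.
move=> f _.
apply: leq_trans (ms_prodX F (index_enum 'I_n) (fun x => lshift 2 (mxvec_index x (f x)))) _.
by rewrite /index_enum [X in size X]unlock -enumT -cardT card_ord.
Qed.

Lemma tdeg_Pfam (F : fieldType) n : (tdeg (Pfam F n) <= 9 * n + 19)%N.
Proof.
rewrite /tdeg /Pfam; set H := HCext F n; set Y := 'X_(yvar n); set Z := 'X_(zvar n).
have hH := ms_HCext F n; rewrite -/H in hH.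
have hY : msize Y = 2%N by rewrite msX.
have hZ : msize Z = 2%N by rewrite msX.
rewrite !expr2.
have h1 := msM Z Z; have h2 := msM Y H; have h3 := msM Y Y; have h4 := msM H H.
have h5 := msM (Y * Y) (H * H); have h6 := msD (Y * H) (Y * Y * (H * H)).
have h7 := msM (Z * Z) (Y * H + Y * Y * (H * H)).
apply: leq_trans (leq_pred _) _.
move: hH hY hZ h1 h2 h3 h4 h5 h6 h7.
set a7 := mmeasure mdeg (Z * Z * _); set a6 := mmeasure mdeg (Y * H + _);
set a5 := mmeasure mdeg (Y * Y * _); set a4 := mmeasure mdeg (H * H);
set a3 := mmeasure mdeg (Y * Y); set a2 := mmeasure mdeg (Y * H);
set a1 := mmeasure mdeg (Z * Z); set aH := mmeasure mdeg H;
set aY := mmeasure mdeg Y; set aZ := mmeasure mdeg Z.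
clearbody a7 a6 a5 a4 a3 a2 a1 aH aY aZ; lia.
Qed.

Lemma pfamily_P (F : fieldType) : is_pfamily (@Pfam F).
Proof.
split.
  exists 2%N => n; rewrite -mulnn; lia.
exists 19%N => n; apply: leq_trans (tdeg_Pfam F n) _; rewrite leq_add2r.
suff : (n <= n ^ 19)%N by lia.
by case: n => // n; rewrite -{1}(expn1 n.+1) leq_pexp2l.
Qed.

Theorem lemma4 (F : fieldType) : VNPC (@Pfam F).
Proof.
split; first by split; [exact: pfamily_P | exact: preduc_P].
exists (fun n => n); split; last by move=> n; exact: bproj_P.
by exists 1%N => n; rewrite expn1 mul1n leq_addr.
Qed.
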